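(* Let $V=\langle f,g,h\rangle\subset R_2$ be a three-dimensional space of quadrics in $R=K[w,x,y,z]$ whose space of linear relations $\{(\alpha_1,\alpha_2,\alpha_3)\in R_1^3:\alpha_1f+\alpha_2g+\alpha_3h=0\}$ is exactly one-dimensional. Then $V=\langle \ell\cdot U,h'\rangle$ where $\ell\in R_1$ is a linear form, $U\subset R_1$ is a two-dimensional subspace of linear forms, and $h'$ is a quadric divisible neither by $\ell$ nor by any element of $U$. Consequently, after a linear change of coordinates, either $V=\langle xw,yw,h'\rangle$ with $h'$ divisible neither by $w$ nor by any element of $\langle x,y\rangle$, or $V=\langle w^2,wx,h'\rangle$ with $h'$ divisible by no element of $\langle w,x\rangle$.
   Context: $K$ is an algebraically closed field, $R=K[w,x,y,z]$ standard graded, $R_i$ its degree-$i$ component. A net of quadrics is a three-dimensional subspace $V\subset R_2$; a linear relation is a nonzero triple of linear forms $(\alpha_1,\alpha_2,\alpha_3)$ with $\alpha_1f+\alpha_2g+\alpha_3h=0$. *)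

(* Defs.v *)
From HB Require Import structures.
From mathcomp Require Import all_boot all_order all_algebra.
From mathcomp Require Import mpoly.
Set Implicit Arguments. Unset Strict Implicit. Unset Printing Implicit Defensive.
Import GRing.Theory.
Local Open Scope ring_scope.

Section Defs.
Variable K : closedFieldType.
Local Notation P := {mpoly K[4]}.

Definition Xw : P := 'X_(@Ordinal 4 0 isT).
Definition Xx : P := 'X_(@Ordinal 4 1 isT).
Definition Xy : P := 'X_(@Ordinal 4 2 isT).
Definition Xz : P := 'X_(@Ordinal 4 3 isT).

(* R_1 and R_2: homogeneous of degree 1 / 2 (0 included) *)
Definition linform (p : P) : Prop := p \is 1.-homog.
Definition quadric (p : P) : Prop := p \is 2.-homog.

Definition span2 (a b : P) (p : P) : Prop :=
  exists x y : K, p = x *: a + y *: b.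
Definition span3 (a b c : P) (p : P) : Prop :=
  exists x y z : K, p = x *: a + y *: b + z *: c.

Definition lin_indep2 (a b : P) : Prop :=
  forall x y : K, x *: a + y *: b = 0 -> x = 0 /\ y = 0.
Definition lin_indep3 (a b c : P) : Prop :=
  forall x y z : K, x *: a + y *: b + z *: c = 0 -> x = 0 /\ y = 0 /\ z = 0.

Definition same_span3 (a b c a' b' c' : P) : Prop :=
  forall p, span3 a b c p <-> span3 a' b' c' p.

Definition mdvd (a p : P) : Prop := exists q : P, p = q * a.

Definition linrel (f g h a1 a2 a3 : P) : Prop :=
  [/\ linform a1, linform a2, linform a3 & a1 * f + a2 * g + a3 * h = 0].

Definition linrels_dim1 (f g h : P) : Prop :=
  exists a1 a2 a3 : P,
    [/\ linrel f g h a1 a2 a3, (a1, a2, a3) != (0, 0, 0) &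
        forall b1 b2 b3, linrel f g h b1 b2 b3 ->
          exists c : K, [/\ b1 = c *: a1, b2 = c *: a2 & b3 = c *: a3]].

(* a linear change of coordinates: X_i |-> t_i with t_0..t_3 linearly
   independent linear forms (i.e. an invertible linear substitution) *)
Definition coord_change (t : 4.-tuple P) : Prop :=
  (forall i, linform (tnth t i)) /\
  (forall c : 'I_4 -> K, \sum_(i < 4) c i *: tnth t i = 0 -> forall i, c i = 0).

End Defs.

(* Main.v *)
Require Import Defs.
From HB Require Import structures.
From mathcomp Require Import all_boot all_order all_algebra.
From mathcomp Require Import mpoly.
From mathcomp Require Import ring.
From Stdlib Require Import Classical.
Import GRing.Theory.
Local Open Scope ring_scope.


Section Aux.
Variable K : closedFieldType.
Local Notation P := {mpoly K[4]}.

Lemma scE (c : K) (p : P) : c *: p = c%:MP * p.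
Proof. by rewrite mul_mpolyC. Qed.

Definition psi (k : 'I_4) : 4.-tuple P := [tuple (if i == k then 0 else 'X_i) | i < 4].

Lemma psi_var k j : 'X_j \mPo psi k = if j == k then 0 else 'X_j.
Proof. by rewrite comp_mpolyXU -tnth_nth tnth_mktuple. Qed.

Lemma psiX k (m : 'X_{1..4}) : 'X_[m] \mPo psi k = if m k == 0%N then 'X_[m] else 0 :> P.
Proof.
rewrite comp_mpolyX; case: eqP => [mk0|/eqP mk].
- rewrite [RHS]mpolyXE_id; apply: eq_bigr => i _; rewrite tnth_mktuple.
  by case: eqP => [->|]; rewrite ?mk0 ?expr0.
- by rewrite (bigD1 k) //= tnth_mktuple eqxx expr0n (negbTE mk) mul0r.
Qed.

Lemma M1 k d (p : P) : p \is d.+1.-homog ->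
  exists2 q : P, q \is d.-homog & p = 'X_k * q + (p \mPo psi k).
Proof.
move=> hp.
have gen : forall (s : seq 'X_{1..4}) (c : 'X_{1..4} -> K),
    all (fun m => mdeg m == d.+1) s ->
  exists2 q : P, q \is d.-homog & \sum_(m <- s) c m *: 'X_[m]
     = 'X_k * q + ((\sum_(m <- s) c m *: 'X_[m]) \mPo psi k).
  elim=> [|m s IH] c /=.
    by move=> _; exists 0; rewrite ?rpred0 // big_nil comp_mpoly0 mulr0 addr0.
  case/andP=> /eqP hm /(IH c) [q hq eq]; rewrite !big_cons raddfD /= {1}eq.
  rewrite comp_mpolyZ psiX.
  case: eqP => [mk0|/eqP mk].
    by exists q => //; rewrite !scE; ring.
  have le : (U_(k) <= m)%MM.
    by apply/mnm_lepP => i; rewrite mnm1E; case: eqP => [<-|]; rewrite ?lt0n.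
  exists (c m *: 'X_[m - U_(k)] + q).
    apply: rpredD => //; apply: rpredZ; rewrite dhomogX.
    have := mdegD (m - U_(k)) U_(k); rewrite submK // mdeg1 hm addn1.
    by move=> [->].
  rewrite scaler0 ?addr0 ?add0r -[X in 'X_[X]](submK le) mpolyXD !scE; ring.
have [|q hq e] := gen (msupp p) (fun m => p@_m).
  by apply/allP => m hm; apply/eqP; exact: dhomog_mf hp m hm.
by exists q => //; rewrite -mpolyE in e.
Qed.
Arguments M1 k {d p}.


Definition i0 : 'I_4 := @Ordinal 4 0 isT.
Definition i1 : 'I_4 := @Ordinal 4 1 isT.
Definition i2 : 'I_4 := @Ordinal 4 2 isT.
Definition i3 : 'I_4 := @Ordinal 4 3 isT.

Lemma Xnz (i : 'I_4) : 'X_i != 0 :> P.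
Proof.
apply/eqP => /(congr1 (mcoeff U_(i))); rewrite mcoeffX eqxx mcoeff0.
by move/eqP; rewrite oner_eq0.
Qed.

Lemma Xhomog (i : 'I_4) : ('X_i : P) \is 1.-homog.
Proof. by rewrite dhomogX /= mdeg1. Qed.

Lemma cancelX (i : 'I_4) (a : P) : 'X_i * a = 0 -> a = 0.
Proof. by move/eqP; rewrite mulf_eq0 (negbTE (Xnz i)) => /eqP. Qed.

Lemma psi_same k : 'X_k \mPo psi k = 0 :> P.
Proof. by rewrite psi_var eqxx. Qed.

Lemma psi_diff j k : j != k -> 'X_j \mPo psi k = 'X_j :> P.
Proof. by rewrite psi_var => /negbTE ->. Qed.

Lemma koszul (F G H : P) : F \is 2.-homog -> G \is 2.-homog -> H \is 2.-homog ->
  'X_i0 * F + 'X_i1 * G + 'X_i2 * H = 0 ->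
  exists c1 c2 c3 : P, [/\ c1 \is 1.-homog, c2 \is 1.-homog, c3 \is 1.-homog,
     F = 'X_i1 * c3 - 'X_i2 * c2 & c1 * F + c2 * G + c3 * H = 0].
Proof.
move=> hF hG hH e.
have [qG hqG eG] := M1 i0 hG.
have [qH hqH eH] := M1 i0 hH.
set G0 := G \mPo psi i0 in eG; set H0 := H \mPo psi i0 in eH.
have e0 : 'X_i1 * G0 + 'X_i2 * H0 = 0.
  have := congr1 (comp_mpoly (psi i0)) e.
  by rewrite !rmorphD !rmorphM /= psi_same !psi_diff // mul0r add0r raddf0.
have hG0 : G0 \is 2.-homog.
  have -> : G0 = G - 'X_i0 * qG by rewrite eG; ring.
  by apply: rpredB => //; apply: (dhomogM (Xhomog _) hqG).
have [r hr eG0] := M1 i2 hG0.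
have z : G0 \mPo psi i2 = 0.
  have := congr1 (comp_mpoly (psi i2)) e0.
  rewrite !rmorphD !rmorphM /= psi_same !psi_diff // mul0r addr0 raddf0.
  exact: cancelX.
rewrite z addr0 in eG0.
have eH0 : H0 = - ('X_i1 * r).
  have : 'X_i2 * (H0 + 'X_i1 * r) = 'X_i1 * G0 + 'X_i2 * H0 by rewrite eG0; ring.
  by rewrite e0 => /cancelX/eqP; rewrite addr_eq0 => /eqP.
have eF : F = - ('X_i1 * qG + 'X_i2 * qH).
  have : 'X_i0 * (F + ('X_i1 * qG + 'X_i2 * qH)) = 'X_i0 * F + 'X_i1 * G + 'X_i2 * H.
    by rewrite eG eH eG0 eH0; ring.
  by rewrite e => /cancelX/eqP; rewrite addr_eq0 => /eqP.
exists r, qH, (- qG); split => //; first by rewrite rpredN.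
  by rewrite eF; ring.
by rewrite eF eG eH eG0 eH0; ring.
Qed.

End Aux.


Section LA.
Variable K : closedFieldType.

Lemma ext1 k n (B : 'M[K]_(k,n)) : row_free B -> (k < n)%N ->
  exists e : 'rV_n, row_free (col_mx B e).
Proof.
move=> hB lt.
have [j hj] : exists j : 'I_n, ~~ ((delta_mx 0 j : 'rV[K]_n) <= B)%MS.
  case: (pickP (fun j => ~~ ((delta_mx 0 j : 'rV[K]_n) <= B)%MS)) => [j hj|all]; first by exists j.
  exfalso; have : (1%:M <= B)%MS.
    apply/row_subP => i; rewrite row1; have := all i; by move/negbFE.
  move/mxrankS; rewrite mxrank1 => le.
  move: hB; rewrite /row_free => /eqP hr; rewrite hr in le.
  by move: (leq_trans lt le); rewrite ltnn.
exists ((delta_mx 0 j : 'rV[K]_n)); rewrite /row_free -addsmxE.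
have lt2 : (B < B + (delta_mx 0 j : 'rV[K]_n))%MS.
  rewrite ltmxE addsmxSl /= addsmx_sub submx_refl /=; exact: hj.
move: lt2; rewrite ltmxErank => /andP [_ lt2].
move: hB; rewrite /row_free => /eqP hr; rewrite hr in lt2.
rewrite eqn_leq addn1 lt2 andbT.
have := rank_leq_row (col_mx B ((delta_mx 0 j : 'rV[K]_n))).
by rewrite -addsmxE addn1.
Qed.

Lemma completeD d : forall k (B : 'M[K]_(k,4)), (k + d = 4)%N -> row_free B ->
  exists2 M : 'M[K]_4, M \in unitmx &
    forall i : 'I_k, exists2 j : 'I_4, val j = val i & row j M = row i B.
Proof.
elim: d => [|d IH] k B.
  rewrite addn0 => ek; subst k => hB.
  by exists B; [rewrite -row_free_unit | move=> i; exists i].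
move=> ek hB.
have lt : (k < 4)%N by rewrite -ek -addSnnS leq_addr.
have [e he] := @ext1 k 4 B hB lt.
have ek' : ((k + 1) + d = 4)%N by rewrite -addnA add1n.
have [M hM hrow] := IH _ _ ek' he.
exists M => // i.
have [j hj1 hj2] := hrow (lshift 1 i).
by exists j => //; rewrite hj2 rowKu.
Qed.


Local Notation P := {mpoly K[4]}.
Definition lf (v : 'rV[K]_4) : P := \sum_(i < 4) v 0 i *: 'X_i.
Definition cf (p : P) : 'rV[K]_4 := \row_(i < 4) p@_U_(i)%MM.

Lemma lf_homog v : lf v \is 1.-homog.
Proof. apply: rpred_sum => i _; apply: rpredZ; by rewrite dhomogX /= mdeg1. Qed.

Lemma mcoeff_lf v m : (lf v)@_m = \sum_(i < 4) v 0 i * (U_(i)%MM == m)%:R.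
Proof. rewrite /lf raddf_sum /=; apply: eq_bigr => i _; by rewrite mcoeffZ mcoeffX. Qed.

Lemma U_inj (i j : 'I_4) : (U_(i)%MM == U_(j)%MM :> 'X_{1..4}) = (i == j).
Proof.
apply/eqP/eqP => [e|->//]; have := congr1 (fun m : 'X_{1..4} => m j) e.
by rewrite !mnm1E eqxx; case: eqP.
Qed.

Lemma cf_lf v : cf (lf v) = v.
Proof.
apply/rowP => j; rewrite mxE mcoeff_lf (bigD1 j) //= U_inj eqxx mulr1 big1 ?addr0 // => i hi.
by rewrite U_inj (negbTE hi) mulr0.
Qed.

Lemma cf0 : cf 0 = 0.
Proof. by apply/rowP => j; rewrite !mxE mcoeff0. Qed.

Lemma lfK p : p \is 1.-homog -> lf (cf p) = p.
Proof.
move=> hp; apply/mpolyP => m; rewrite mcoeff_lf.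
have [/mdeg1P [i /eqP ->]|nd] := boolP (mdeg m == 1%N).
  rewrite (bigD1 i) //= U_inj eqxx mulr1 big1 ?addr0 ?mxE // => j hj.
  by rewrite U_inj (negbTE hj) mulr0.
rewrite (dhomog_nemf_coeff hp nd) big1 // => i _.
have /negbTE -> : U_(i)%MM != m by apply: contraNneq nd => <-; rewrite mdeg1.
by rewrite mulr0.
Qed.

Lemma lin_comb k (c : 'I_k -> K) (U : 'M[K]_(k,4)) :
  \sum_(i < k) c i *: lf (row i U) = lf ((\row_i c i) *m U).
Proof.
rewrite /lf; under eq_bigr do rewrite scaler_sumr.
rewrite exchange_big /=; apply: eq_bigr => j _; rewrite !mxE scaler_suml.
by apply: eq_bigr => i _; rewrite !mxE scalerA.
Qed.

Lemma comp_comp (p : P) (t s : 4.-tuple P) :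
  (p \mPo t) \mPo s = p \mPo [tuple (tnth t i \mPo s) | i < 4].
Proof.
rewrite (comp_mpolyEX p t) (comp_mpolyEX p [tuple _ | i < 4]) raddf_sum /=.
apply: eq_bigr => m _.
rewrite comp_mpolyZ !comp_mpolyX rmorph_prod; congr (_ *: _); apply: eq_bigr => i _.
by rewrite rmorphXn tnth_mktuple.
Qed.

Definition tupM (M : 'M[K]_4) : 4.-tuple P := [tuple lf (row i M) | i < 4].

Lemma tupM_var M i : 'X_i \mPo tupM M = lf (row i M).
Proof. by rewrite comp_mpolyXU -tnth_nth tnth_mktuple. Qed.

Lemma lf_comp v (U : 'M[K]_4) : lf v \mPo tupM U = lf (v *m U).
Proof.
rewrite {1}/lf raddf_sum /=.
under eq_bigr do rewrite comp_mpolyZ tupM_var.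
rewrite lin_comb; congr (lf (_ *m _)); by apply/rowP => i; rewrite mxE.
Qed.

Lemma lf_row1 i : lf (row i 1%:M) = 'X_i.
Proof.
rewrite /lf (bigD1 i) //= !mxE eqxx scale1r big1 ?addr0 // => j hj.
by rewrite !mxE eq_sym (negbTE hj) scale0r.
Qed.

Lemma tup_inv (M N : 'M[K]_4) : N *m M = 1%:M -> forall p : P, (p \mPo tupM N) \mPo tupM M = p.
Proof.
move=> e p; rewrite comp_comp.
have -> : [tuple (tnth (tupM N) i \mPo tupM M) | i < 4] = [tuple 'X_i | i < 4].
  by apply: eq_mktuple => i; rewrite tnth_mktuple lf_comp -row_mul e lf_row1.
exact: comp_mpoly_id.
Qed.

Lemma cc_tupM N : N \in unitmx -> coord_change (tupM N).
Proof.
move=> hN; split => [i|c hc i]; first by rewrite /linform tnth_mktuple lf_homog.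
have : \sum_(i < 4) c i *: lf (row i N) = 0.
  rewrite -[RHS]hc; by apply: eq_bigr => j _; rewrite tnth_mktuple.
rewrite lin_comb => /(congr1 cf); rewrite cf_lf cf0 => h0.
have : (\row_i c i) = 0 :> 'rV[K]_4 by rewrite -(mulmxK hN (\row_i c i)) h0 mul0mx.
by move/rowP/(_ i); rewrite !mxE.
Qed.

Lemma coord k (v : 'I_k -> P) : (forall i, v i \is 1.-homog) ->
  (forall c : 'I_k -> K, \sum_i c i *: v i = 0 -> forall i, c i = 0) -> (k <= 4)%N ->
  exists t s : 4.-tuple P, [/\ coord_change t, (forall i, tnth s i \is 1.-homog),
    (forall p : P, (p \mPo t) \mPo s = p), (forall p : P, (p \mPo s) \mPo t = p) &
    forall i : 'I_k, exists2 j : 'I_4, val j = val i & v i \mPo t = 'X_j /\ 'X_j \mPo s = v i].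
Proof.
move=> hv hind hk.
pose B : 'M[K]_(k,4) := \matrix_(i < k) cf (v i).
have hB : row_free B.
  apply: inj_row_free => w hw; apply/rowP => i; rewrite mxE.
  apply: (hind (fun i => w 0 i)).
  transitivity (\sum_(i < k) w 0 i *: lf (row i B)).
    by apply: eq_bigr => j _; rewrite rowK lfK.
  rewrite lin_comb; have -> : \row_i w 0 i = w by apply/rowP => j; rewrite mxE.
  rewrite hw; apply/mpolyP => m; rewrite mcoeff_lf mcoeff0 big1 // => j _; by rewrite mxE mul0r.
have [M hM hrow] := @completeD (4 - k) k B (subnKC hk) hB.
exists (tupM (invmx M)), (tupM M); split.
- by apply: cc_tupM; rewrite unitmx_inv.
- by move=> i; rewrite tnth_mktuple lf_homog.
- by apply: tup_inv; rewrite mulVmx.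
- by apply: tup_inv; rewrite mulmxV.
move=> i; have [j hj1 hj2] := hrow i; exists j => //.
rewrite rowK in hj2; rewrite tupM_var hj2 (lfK _ (hv i)); split => //.
by rewrite -(lfK _ (hv i)) -hj2 lf_comp -row_mul mulmxV // lf_row1.
Qed.

End LA.

Set Implicit Arguments. Unset Strict Implicit.


Section C.
Variable K : closedFieldType.
Local Notation P := {mpoly K[4]}.

Lemma comp_homog d (p : P) (t : 4.-tuple P) : (forall i, tnth t i \is 1.-homog) ->
  p \is d.-homog -> p \mPo t \is d.-homog.
Proof.
move=> ht hp; rewrite comp_mpolyE big_seq; apply: rpred_sum => m hm; apply: rpredZ.
rewrite -(dhomog_mf hp hm).
have H : \prod_(i < 4) tnth t i ^+ m i \is (\sum_(i<4) m i)%N.-homog.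
  apply: (big_ind2 (fun (n : nat) (x : P) => x \is n.-homog)).
  - exact: dhomog1.
  - by move=> n1 x1 n2 x2 h1 h2; apply: dhomogM.
  - by move=> i _; have := dhomogMn (m i) (ht i); rewrite mul1n.
by move: H; rewrite -mdegE.
Qed.

Lemma coord3 (a b c : P) : a \is 1.-homog -> b \is 1.-homog -> c \is 1.-homog ->
  lin_indep3 a b c ->
  exists t s : 4.-tuple P, [/\ coord_change t, (forall i, tnth s i \is 1.-homog),
    (forall p : P, (p \mPo t) \mPo s = p), (forall p : P, (p \mPo s) \mPo t = p) &
    [/\ a \mPo t = 'X_i0, b \mPo t = 'X_i1 & c \mPo t = 'X_i2] /\
    [/\ 'X_i0 \mPo s = a, 'X_i1 \mPo s = b & 'X_i2 \mPo s = c]].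
Proof.
move=> ha hb hc hi.
pose v := fun i : 'I_3 => [:: a; b; c]`_i.
have [|||t [s [h1 h2 h3 h4 h5]]] := @coord K 3 v.
- by case=> [[|[|[|?]]] ?].
- move=> co; rewrite !big_ord_recl big_ord0 addr0 /= addrA => e.
  have [e1 [e2 e3]] := hi _ _ _ e.
  by case=> [[|[|[|?]]] ?] //; [rewrite -e1 | rewrite -e2 | rewrite -e3]; congr co; apply: val_inj.
- by [].
exists t, s; split => //.
have [j0 hj0 [e0 f0]] := h5 ord0.
have [j1 hj1 [e1 f1]] := h5 (lift ord0 ord0).
have [j2 hj2 [e2 f2]] := h5 (lift ord0 (lift ord0 ord0)).
have -> : i0 = j0 by apply: val_inj; rewrite hj0.
have -> : i1 = j1 by apply: val_inj; rewrite hj1.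
have -> : i2 = j2 by apply: val_inj; rewrite hj2.
by split.
Qed.


Lemma coord2 (a b : P) : a \is 1.-homog -> b \is 1.-homog -> lin_indep2 a b ->
  exists t s : 4.-tuple P, [/\ coord_change t, (forall i, tnth s i \is 1.-homog),
    (forall p : P, (p \mPo t) \mPo s = p), (forall p : P, (p \mPo s) \mPo t = p) &
    [/\ a \mPo t = 'X_i0, b \mPo t = 'X_i1, 'X_i0 \mPo s = a & 'X_i1 \mPo s = b]].
Proof.
move=> ha hb hi.
pose v := fun i : 'I_2 => [:: a; b]`_i.
have [|||t [s [h1 h2 h3 h4 h5]]] := @coord K 2 v.
- by case=> [[|[|?]] ?].
- move=> co; rewrite !big_ord_recl big_ord0 addr0 /= => e.
  have [e1 e2] := hi _ _ e.
  by case=> [[|[|?]] ?] //; [rewrite -e1 | rewrite -e2]; congr co; apply: val_inj.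
- by [].
exists t, s; split => //.
have [j0 hj0 [e0 f0]] := h5 ord0.
have [j1 hj1 [e1 f1]] := h5 (lift ord0 ord0).
have -> : i0 = j0 by apply: val_inj; rewrite hj0.
have -> : i1 = j1 by apply: val_inj; rewrite hj1.
by split.
Qed.

Lemma coord1 (a : P) : a \is 1.-homog -> a != 0 ->
  exists t s : 4.-tuple P, [/\ coord_change t, (forall i, tnth s i \is 1.-homog),
    (forall p : P, (p \mPo t) \mPo s = p), (forall p : P, (p \mPo s) \mPo t = p) &
    a \mPo t = 'X_i0 /\ 'X_i0 \mPo s = a].
Proof.
move=> ha hi.
pose v := fun i : 'I_1 => a.
have [|||t [s [h1 h2 h3 h4 h5]]] := @coord K 1 v.
- by [].
- move=> co; rewrite big_ord_recl big_ord0 addr0 /= => /eqP; rewrite scaler_eq0 (negbTE hi) orbF.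
  by move=> /eqP e [[|?] ?] //; rewrite -e; congr co; apply: val_inj.
- by [].
exists t, s; split => //.
have [j0 hj0 [e0 f0]] := h5 ord0.
have -> : i0 = j0 by apply: val_inj; rewrite hj0.
by split.
Qed.

Lemma divX (F G : P) : F \is 2.-homog -> 'X_i0 * F + 'X_i1 * G = 0 ->
  exists2 m : P, m \is 1.-homog & F = 'X_i1 * m /\ G = - ('X_i0 * m).
Proof.
move=> hF e.
have z : F \mPo psi K i1 = 0.
  have := congr1 (comp_mpoly (psi K i1)) e.
  rewrite !rmorphD !rmorphM /= psi_same !psi_diff // mul0r addr0 raddf0.
  exact: cancelX.
have [m hm eF] := @M1 K i1 _ _ hF; rewrite z addr0 in eF.
exists m => //; split => //.
have : 'X_i1 * (G + 'X_i0 * m) = 'X_i0 * F + 'X_i1 * G by rewrite eF; ring.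
by rewrite e => /cancelX/eqP; rewrite addr_eq0 => /eqP.
Qed.

Lemma hdivX (h q : P) : h \is 2.-homog -> h = q * 'X_i0 ->
  exists2 m : P, m \is 1.-homog & h = m * 'X_i0.
Proof.
move=> hh e.
have [m hm eh] := @M1 K i0 _ _ hh.
exists m => //.
rewrite {1}eh; have -> : h \mPo psi K i0 = 0 by rewrite e rmorphM /= psi_same mulr0.
by rewrite addr0 mulrC.
Qed.

Lemma divL (a1 a2 F G : P) : a1 \is 1.-homog -> a2 \is 1.-homog -> lin_indep2 a1 a2 ->
  F \is 2.-homog -> a1 * F + a2 * G = 0 ->
  exists2 m : P, m \is 1.-homog & F = a2 * m /\ G = - (a1 * m).
Proof.
move=> h1 h2 hi hF e.
have [t [s [[ht _] hs i1 i2 [e1 e2 f1 f2]]]] := coord2 h1 h2 hi.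
have := congr1 (comp_mpoly t) e; rewrite rmorphD !rmorphM /= e1 e2 raddf0 => e'.
have [m hm [eF eG]] := divX (comp_homog ht hF) e'.
exists (m \mPo s); first exact: comp_homog hs hm.
split.
  by rewrite -(i1 F) eF rmorphM /= f2.
by rewrite -(i1 G) eG rmorphN rmorphM /= f1.
Qed.

Lemma hdivL (v h q : P) : v \is 1.-homog -> v != 0 -> h \is 2.-homog -> h = q * v ->
  exists2 m : P, m \is 1.-homog & h = m * v.
Proof.
move=> hv nv hh e.
have [t [s [[ht _] hs i1 i2 [e1 f1]]]] := coord1 hv nv.
have := congr1 (comp_mpoly t) e; rewrite rmorphM /= e1 => e'.
have [m hm em] := hdivX (comp_homog ht hh) e'.
exists (m \mPo s); first exact: comp_homog hs hm.
by rewrite -(i1 h) em rmorphM /= f1.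
Qed.

End C.


Section D.
Variable K : closedFieldType.
Local Notation P := {mpoly K[4]}.

Definition hyp (f g h a1 a2 a3 : P) :=
  [/\ [/\ quadric f, quadric g & quadric h], lin_indep3 f g h,
      linrel f g h a1 a2 a3, ~ [/\ a1 = 0, a2 = 0 & a3 = 0] &
      forall b1 b2 b3, linrel f g h b1 b2 b3 ->
        exists c : K, [/\ b1 = c *: a1, b2 = c *: a2 & b3 = c *: a3]].

Definition concl (f g h : P) :=
  exists l u1 u2 h' : P,
     [/\ linform l, linform u1, linform u2, lin_indep2 u1 u2 & quadric h'] /\
     [/\ l != 0, same_span3 f g h (l * u1) (l * u2) h', ~ mdvd l h' &
        (forall a b : K, ~ mdvd (a *: u1 + b *: u2) h')].

Lemma same_span (a b c a' b' c' : P) :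
  span3 a b c a' -> span3 a b c b' -> span3 a b c c' ->
  span3 a' b' c' a -> span3 a' b' c' b -> span3 a' b' c' c ->
  same_span3 a b c a' b' c'.
Proof.
have sub : forall a b c a' b' c' : P, span3 a b c a' -> span3 a b c b' -> span3 a b c c' ->
    forall p, span3 a' b' c' p -> span3 a b c p.
  move=> {}a {}b {}c {}a' {}b' {}c' [x1 [y1 [z1 e1]]] [x2 [y2 [z2 e2]]] [x3 [y3 [z3 e3]]] p [x [y [z ->]]].
  exists (x*x1 + y*x2 + z*x3), (x*y1+y*y2+z*y3), (x*z1+y*z2+z*z3).
  by rewrite e1 e2 e3 !scE !mpolyCD !mpolyCM; ring.
move=> h1 h2 h3 h4 h5 h6 p; split; [exact: sub | exact: sub].
Qed.

Lemma spanE (a b c p : P) x y z : p = x *: a + y *: b + z *: c -> span3 a b c p.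
Proof. by move=> ->; exists x, y, z. Qed.

Lemma span_swap12 (a b c p : P) : span3 a b c p -> span3 b a c p.
Proof. by move=> [x [y [z ->]]]; exists y, x, z; rewrite (addrC (x *: a)). Qed.

Lemma span_swap23 (a b c p : P) : span3 a b c p -> span3 a c b p.
Proof. by move=> [x [y [z ->]]]; exists x, z, y; rewrite addrAC. Qed.

Lemma same12 (a b c a' b' c' : P) : same_span3 a b c a' b' c' -> same_span3 b a c a' b' c'.
Proof. move=> H p; split => hp; [apply/H; exact: span_swap12 | apply: span_swap12; exact/H]. Qed.

Lemma same23 (a b c a' b' c' : P) : same_span3 a b c a' b' c' -> same_span3 a c b a' b' c'.
Proof. move=> H p; split => hp; [apply/H; exact: span_swap23 | apply: span_swap23; exact/H]. Qed.

Lemma linrel12 (f g h b1 b2 b3 : P) : linrel f g h b1 b2 b3 -> linrel g f h b2 b1 b3.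
Proof. by case=> ? ? ? e; split => //; rewrite (addrC (b2 * g)). Qed.

Lemma linrel23 (f g h b1 b2 b3 : P) : linrel f g h b1 b2 b3 -> linrel f h g b1 b3 b2.
Proof. by case=> ? ? ? e; split => //; rewrite addrAC. Qed.

Lemma hyp12 (f g h a1 a2 a3 : P) : hyp f g h a1 a2 a3 -> hyp g f h a2 a1 a3.
Proof.
case=> [[qf qg qh] li rel nz U]; split => //.
- move=> x y z e; have e' : y *: f + x *: g + z *: h = 0 by rewrite (addrC (y *: f)).
  by have [-> [-> ->]] := li _ _ _ e'.
- exact: linrel12.
- by case=> e1 e2 e3; apply: nz.
- by move=> b1 b2 b3 /linrel12 /U [c [e1 e2 e3]]; exists c.
Qed.

Lemma hyp23 (f g h a1 a2 a3 : P) : hyp f g h a1 a2 a3 -> hyp f h g a1 a3 a2.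
Proof.
case=> [[qf qg qh] li rel nz U]; split => //.
- move=> x y z e; have e' : x *: f + z *: g + y *: h = 0 by rewrite addrAC.
  by have [-> [-> ->]] := li _ _ _ e'.
- exact: linrel23.
- by case=> e1 e2 e3; apply: nz.
- by move=> b1 b2 b3 /linrel23 /U [c [e1 e2 e3]]; exists c.
Qed.

Lemma one_neq0 : (1 : K) = 0 -> False.
Proof. by move/eqP; rewrite oner_eq0. Qed.

End D.


Section E.
Variable K : closedFieldType.
Local Notation P := {mpoly K[4]}.

Lemma core (f g h a1 a2 a3 : P) (k1 k2 : K) :
  hyp f g h a1 a2 a3 -> a3 = k1 *: a1 + k2 *: a2 -> concl f g h.
Proof.
case=> [[qf qg qh] li [l1 l2 l3 rel] nz U] ea3.
pose F := f + k1 *: h; pose G := g + k2 *: h.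
have rel' : a1 * F + a2 * G = 0.
  by rewrite -[RHS]rel ea3 /F /G !scE; ring.
have qF : F \is 2.-homog by rewrite rpredD // rpredZ.
have hnz : h != 0.
  apply/eqP => h0; have := li 0 0 1; rewrite h0 !scale0r scaler0 !add0r.
  by move=> /(_ erefl) [_ [_ /one_neq0]].
case: (classic (lin_indep2 a1 a2)) => [i2|ni2].
- have [m lm [eF eG]] := divL l1 l2 i2 qF rel'.
  have a2nz : a2 != 0.
    apply/eqP => a20; have := i2 0 1; rewrite a20 scale0r scaler0 add0r.
    by move=> /(_ erefl) [_ /one_neq0].
  have mnz : m != 0.
    apply/eqP => m0; have := li 1 0 k1.
    rewrite scale1r scale0r addr0 -/F eF m0 mulr0.
    by move=> /(_ erefl) [/one_neq0].
  exists m, a2, (- a1), h; split; split => //.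
  + by rewrite /linform rpredN.
  + move=> x y e; have := i2 (- y) x; rewrite scaleNr -scalerN addrC e.
    by move=> /(_ erefl) [/eqP]; rewrite oppr_eq0 => /eqP -> ->.
  + apply: same_span.
    * apply: (spanE (x:=1) (y:=0) (z:=k1)); rewrite mulrC -eF /F !scE mpolyC1 mpolyC0; ring.
    * apply: (spanE (x:=0) (y:=1) (z:=k2)); have -> : m * - a1 = G by rewrite eG; ring.
      rewrite /G !scE mpolyC1 mpolyC0; ring.
    * apply: (spanE (x:=0) (y:=0) (z:=1)); rewrite !scE mpolyC1 mpolyC0; ring.
    * apply: (spanE (x:=1) (y:=0) (z:=(- k1))).
      have -> : f = F - k1 *: h by rewrite /F addrK.
      rewrite eF !scE mpolyC1 mpolyC0 mpolyCN; ring.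
    * apply: (spanE (x:=0) (y:=1) (z:=(- k2))).
      have -> : g = G - k2 *: h by rewrite /G addrK.
      rewrite eG !scE mpolyC1 mpolyC0 mpolyCN; ring.
    * apply: (spanE (x:=0) (y:=0) (z:=1)); rewrite !scE mpolyC1 mpolyC0; ring.
  + case=> q e; have [q' lq' eq'] := hdivL lm mnz qh e.
    have : linrel f g h q' 0 (k1 *: q' - a2).
      split => //; first exact: rpred0.
        by rewrite /linform rpredB // rpredZ.
      transitivity (q' * F - a2 * h); first by rewrite /F !scE; ring.
      by rewrite eF eq'; ring.
    move/U => [c [e1 e2 _]].
    move/eqP: e2; rewrite eq_sym scaler_eq0 (negbTE a2nz) orbF => /eqP c0.
    by move: hnz; rewrite eq' e1 c0 scale0r mul0r eqxx.
  + move=> a b [q e].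
    set v := a *: a2 + b *: - a1 in e *.
    have vnz : v != 0.
      by apply/eqP => v0; move: hnz; rewrite e v0 mulr0 eqxx.
    have lv : v \is 1.-homog by rewrite rpredD // rpredZ // rpredN.
    have [q' lq' eq'] := hdivL lv vnz qh e.
    have q'nz : q' != 0 by apply/eqP => q0; move: hnz; rewrite eq' q0 mul0r eqxx.
    have : linrel f g h (a *: q') (b *: q') ((a * k1 + b * k2) *: q' - m).
      split => //; try by rewrite /linform rpredZ.
        by rewrite /linform rpredB // rpredZ.
      transitivity (q' * (a *: F + b *: G) - m * h); first by rewrite /F /G !scE !mpolyCD !mpolyCM; ring.
      by rewrite eF eG eq' /v !scE; ring.
    move/U => [c [e1 e2 _]].
    have cv : c *: v = 0.
      rewrite !scE in e1 e2.
      transitivity (a%:MP * (c%:MP * a2) - b%:MP * (c%:MP * a1)); first by rewrite /v !scE; ring.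
      by rewrite -e1 -e2; ring.
    move/eqP: cv; rewrite scaler_eq0 (negbTE vnz) orbF => /eqP c0.
    move: e1 e2; rewrite c0 !scale0r => /eqP; rewrite scaler_eq0 (negbTE q'nz) orbF => /eqP a0.
    move=> /eqP; rewrite scaler_eq0 (negbTE q'nz) orbF => /eqP b0.
    by move: vnz; rewrite /v a0 b0 !scale0r addr0 eqxx.
- have [x [y [e hne]]] : exists x y : K, x *: a1 + y *: a2 = 0 /\ ~ (x = 0 /\ y = 0).
    apply: NNPP => H; apply: ni2 => x y e; apply: NNPP => H2; apply: H; by exists x, y.
  have [y0|ynz] := eqVneq y 0.
  + have xnz : x != 0 by apply/eqP => x0; apply: hne.
    move: e; rewrite y0 scale0r addr0 => /eqP; rewrite scaler_eq0 (negbTE xnz) /= => /eqP a10.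
    have a2nz : a2 != 0.
      by apply/eqP => a20; apply: nz; split => //; rewrite ea3 a10 a20 !scaler0 addr0.
    move: rel'; rewrite a10 mul0r add0r => /eqP; rewrite mulf_eq0 (negbTE a2nz) /= => /eqP G0.
    have := li 0 1 k2; rewrite scale0r add0r scale1r -/G G0.
    by move=> /(_ erefl) [_ [/one_neq0]].
  + have ea2 : a2 = (- x / y) *: a1.
      apply: (scalerI ynz); rewrite scalerA mulrC divfK // scaleNr.
      by apply/eqP; rewrite -addr_eq0 addrC e.
    have a1nz : a1 != 0.
      apply/eqP => a10; apply: nz; split => //; first by rewrite ea2 a10 scaler0.
      by rewrite ea3 ea2 a10 !scaler0 addr0.
    have : a1 * (F + (- x / y) *: G) = 0.
      by rewrite -[RHS]rel' ea2 !scE; ring.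
    move=> /eqP; rewrite mulf_eq0 (negbTE a1nz) /= => /eqP e2.
    have := li 1 (- x / y) (k1 + (- x / y) * k2).
    have -> : 1 *: f + (- x / y) *: g + (k1 + - x / y * k2) *: h = F + (- x / y) *: G.
      by rewrite /F /G !scE mpolyC1 !mpolyCD !mpolyCM; ring.
    by move=> /(_ e2) [/one_neq0].
Qed.

End E.


Section F.
Variable K : closedFieldType.
Local Notation P := {mpoly K[4]}.

Lemma no_indep3 (f g h a1 a2 a3 : P) : hyp f g h a1 a2 a3 -> lin_indep3 a1 a2 a3 -> False.
Proof.
case=> [[qf qg qh] li [l1 l2 l3 rel] nz U] ia.
have [t [s [[ht _] hs iv1 iv2 [[e1 e2 e3] [f1 f2 f3]]]]] := coord3 l1 l2 l3 ia.
have := congr1 (comp_mpoly t) rel; rewrite !rmorphD !rmorphM /= e1 e2 e3 raddf0 => rel'.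
have [c1 [c2 [c3 [hc1 hc2 hc3 eF erel]]]] :=
  @koszul K _ _ _ (comp_homog ht qf) (comp_homog ht qg) (comp_homog ht qh) rel'.
have : linrel f g h (c1 \mPo s) (c2 \mPo s) (c3 \mPo s).
  split; try exact: comp_homog hs _.
  by have := congr1 (comp_mpoly s) erel; rewrite !rmorphD !rmorphM /= !iv1 raddf0.
move/U => [lam [d1 d2 d3]].
have : f \mPo t = 0.
  by rewrite eF -(iv2 c2) -(iv2 c3) d2 d3 !comp_mpolyZ e2 e3 !scE; ring.
move=> /(congr1 (comp_mpoly s)); rewrite iv1 raddf0 => f0.
by have := li 1 0 0; rewrite f0 scaler0 !scale0r !addr0 => /(_ erefl) [/one_neq0].
Qed.

Lemma concl12 (f g h : P) : concl g f h -> concl f g h.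
Proof.
by move=> [l [u1 [u2 [h' [H1 [H2 H3 H4 H5]]]]]]; exists l, u1, u2, h'; split => //; split => //; apply: same12.
Qed.

Lemma concl23 (f g h : P) : concl f h g -> concl f g h.
Proof.
by move=> [l [u1 [u2 [h' [H1 [H2 H3 H4 H5]]]]]]; exists l, u1, u2, h'; split => //; split => //; apply: same23.
Qed.

Lemma solve3 (a1 a2 a3 : P) (k1 k2 k3 : K) : k3 != 0 ->
  k1 *: a1 + k2 *: a2 + k3 *: a3 = 0 -> a3 = (- k1 / k3) *: a1 + (- k2 / k3) *: a2.
Proof.
move=> nz e; apply: (scalerI nz); rewrite scalerDr !scalerA !(mulrC k3) !divfK // !scaleNr.
by rewrite -opprD; apply/eqP; rewrite -subr_eq0 opprK addrC; apply/eqP.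
Qed.

Lemma part1 (f g h a1 a2 a3 : P) : hyp f g h a1 a2 a3 -> concl f g h.
Proof.
move=> H.
case: (classic (lin_indep3 a1 a2 a3)) => [ia|nia]; first by case: (no_indep3 H ia).
have [k1 [k2 [k3 [e hne]]]] : exists k1 k2 k3 : K,
    k1 *: a1 + k2 *: a2 + k3 *: a3 = 0 /\ ~ [/\ k1 = 0, k2 = 0 & k3 = 0].
  apply: NNPP => H'; apply: nia => x y z e; apply: NNPP => H2; apply: H'.
  by exists x, y, z; split => //; case=> ? ? ?; apply: H2.
have [k30|k3nz] := eqVneq k3 0; last exact: core H (solve3 k3nz e).
have [k20|k2nz] := eqVneq k2 0.
  have k1nz : k1 != 0 by apply/eqP => k10; apply: hne.
  apply: concl12; apply: concl23.
  have e' : 0 *: a2 + 0 *: a3 + k1 *: a1 = 0 by rewrite !scale0r !add0r -e k20 k30 !scale0r !addr0.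
  exact: core (hyp23 (hyp12 H)) (solve3 k1nz e').
apply: concl23.
have e' : k1 *: a1 + k3 *: a3 + k2 *: a2 = 0 by rewrite addrAC.
exact: core (hyp23 H) (solve3 k2nz e').
Qed.

End F.


Section G.
Variable K : closedFieldType.
Local Notation P := {mpoly K[4]}.

Lemma XwE : Xw K = 'X_i0. Proof. by []. Qed.
Lemma XxE : Xx K = 'X_i1. Proof. by []. Qed.
Lemma XyE : Xy K = 'X_i2. Proof. by []. Qed.

Lemma same_comp (a b c a' b' c' : P) (t : 4.-tuple P) : same_span3 a b c a' b' c' ->
  same_span3 (a \mPo t) (b \mPo t) (c \mPo t) (a' \mPo t) (b' \mPo t) (c' \mPo t).
Proof.
have key : forall a b c q : P, span3 a b c q -> span3 (a \mPo t) (b \mPo t) (c \mPo t) (q \mPo t).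
  by move=> a0 b0 c0 q [x [y [z ->]]]; exists x, y, z; rewrite !raddfD /= !comp_mpolyZ.
move=> H p; split => [[x [y [z ->]]]|[x [y [z ->]]]].
- have -> : x *: (a \mPo t) + y *: (b \mPo t) + z *: (c \mPo t) = (x *: a + y *: b + z *: c) \mPo t.
    by rewrite !raddfD /= !comp_mpolyZ.
  by apply: key; apply/H; exists x, y, z.
- have -> : x *: (a' \mPo t) + y *: (b' \mPo t) + z *: (c' \mPo t) = (x *: a' + y *: b' + z *: c') \mPo t.
    by rewrite !raddfD /= !comp_mpolyZ.
  by apply: key; apply/H; exists x, y, z.
Qed.

Lemma same_trans (a b c a' b' c' a'' b'' c'' : P) : same_span3 a b c a' b' c' ->
  same_span3 a' b' c' a'' b'' c'' -> same_span3 a b c a'' b'' c''.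
Proof. by move=> H1 H2 p; split => hp; [apply/H2/H1 | apply/H1/H2]. Qed.

Lemma claimB (a b : K) (u1 u2 h' : P) : u1 \is 1.-homog -> u2 \is 1.-homog ->
  lin_indep2 u1 u2 -> a *: u1 + b *: u2 != 0 ->
  exists u : P, [/\ u \is 1.-homog, lin_indep2 (a *: u1 + b *: u2) u,
    same_span3 ((a *: u1 + b *: u2) * u1) ((a *: u1 + b *: u2) * u2) h'
               ((a *: u1 + b *: u2) * (a *: u1 + b *: u2)) ((a *: u1 + b *: u2) * u) h' &
    forall c d : K, exists c' d' : K, c *: (a *: u1 + b *: u2) + d *: u = c' *: u1 + d' *: u2].
Proof.
move=> hu1 hu2 iu lnz.
set L := a *: u1 + b *: u2.
have [b0|bnz] := eqVneq b 0.
- have anz : a != 0 by apply/eqP => a0; move: lnz; rewrite /L a0 b0 !scale0r addr0 eqxx.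
  exists u2; split => //.
  + move=> p q ep; have := iu (p * a) q.
    have -> : (p * a) *: u1 + q *: u2 = p *: L + q *: u2 by rewrite /L b0 !scE !mpolyCM mpolyC0; ring.
    move=> /(_ ep) [/eqP]; rewrite mulf_eq0 (negbTE anz) orbF => /eqP -> ->; done.
  + apply: same_span.
    * apply: (spanE (x:=a) (y:=0) (z:=0)); rewrite /L b0 !scE mpolyC0; ring.
    * apply: (spanE (x:=0) (y:=1) (z:=0)); rewrite !scE mpolyC0 mpolyC1; ring.
    * apply: (spanE (x:=0) (y:=0) (z:=1)); rewrite !scE mpolyC0 mpolyC1; ring.
    * apply: (spanE (x:=a^-1) (y:=0) (z:=0)).
      have H1 : L * u1 = (a^-1 * a) *: (L * u1) by rewrite mulVf // scale1r.
      rewrite {1}H1 /L b0 !scE mpolyC0 mpolyCM; ring.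
    * apply: (spanE (x:=0) (y:=1) (z:=0)); rewrite !scE mpolyC0 mpolyC1; ring.
    * apply: (spanE (x:=0) (y:=0) (z:=1)); rewrite !scE mpolyC0 mpolyC1; ring.
  + move=> c d; exists (c * a), d; rewrite /L b0 !scE mpolyC0 mpolyCM; ring.
- exists u1; split => //.
  + move=> p q ep; have := iu (p * a + q) (p * b).
    have -> : (p * a + q) *: u1 + (p * b) *: u2 = p *: L + q *: u1.
      by rewrite /L !scE !mpolyCD !mpolyCM; ring.
    move=> /(_ ep) [e1 /eqP]; rewrite mulf_eq0 (negbTE bnz) orbF => /eqP p0.
    by move: e1; rewrite p0 mul0r add0r.
  + apply: same_span.
    * apply: (spanE (x:=a) (y:=b) (z:=0)); rewrite /L !scE mpolyC0; ring.
    * apply: (spanE (x:=1) (y:=0) (z:=0)); rewrite !scE mpolyC0 mpolyC1; ring.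
    * apply: (spanE (x:=0) (y:=0) (z:=1)); rewrite !scE mpolyC0 mpolyC1; ring.
    * apply: (spanE (x:=0) (y:=1) (z:=0)); rewrite !scE mpolyC0 mpolyC1; ring.
    * apply: (spanE (x:=b^-1) (y:=- (a / b)) (z:=0)).
      have H1 : L * u2 = (b^-1 * b) *: (L * u2) by rewrite mulVf // scale1r.
      rewrite {1}H1 /L !scE mpolyC0 mpolyCN !mpolyCM; ring.
    * apply: (spanE (x:=0) (y:=0) (z:=1)); rewrite !scE mpolyC0 mpolyC1; ring.
  + move=> c d; exists (c * a + d), (c * b); rewrite /L !scE !mpolyCD !mpolyCM; ring.
Qed.

End G.


Section H.
Variable K : closedFieldType.
Local Notation P := {mpoly K[4]}.

Lemma part2 (f g h : P) : concl f g h ->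
  exists (t : 4.-tuple P) (h' : P),
     coord_change t /\ quadric h' /\
     ((same_span3 (f \mPo t) (g \mPo t) (h \mPo t)
                  (Xx K * Xw K) (Xy K * Xw K) h'
       /\ ~ mdvd (Xw K) h'
       /\ forall a b : K, ~ mdvd (a *: Xx K + b *: Xy K) h')
      \/
      (same_span3 (f \mPo t) (g \mPo t) (h \mPo t)
                  (Xw K ^+ 2) (Xw K * Xx K) h'
       /\ forall a b : K, ~ mdvd (a *: Xw K + b *: Xx K) h')).
Proof.
move=> [l [u1 [u2 [h' [[hl hu1 hu2 iu hh'] [lnz sp ndl ndu]]]]]].
case: (classic (lin_indep3 l u1 u2)) => [i3|ni3].
- have [t [s [ct hs iv1 iv2 [[e1 e2 e3] [f1 f2 f3]]]]] := coord3 hl hu1 hu2 i3.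
  have [ht _] := ct.
  exists t, (h' \mPo t); split => //; split; first exact: comp_homog ht hh'.
  left; split; [|split].
  + have := same_comp t sp; rewrite !rmorphM /= e1 e2 e3.
    by rewrite XwE XxE XyE (mulrC 'X_i1) (mulrC 'X_i2).
  + case=> q e; apply: ndl; exists (q \mPo s).
    by rewrite -(iv1 h') e XwE rmorphM /= f1.
  + move=> a b [q e]; apply: (ndu a b); exists (q \mPo s).
    by rewrite -(iv1 h') e XxE XyE rmorphM /= raddfD /= !comp_mpolyZ f2 f3.
- have [x [y [z [e hne]]]] : exists x y z : K,
      x *: l + y *: u1 + z *: u2 = 0 /\ ~ [/\ x = 0, y = 0 & z = 0].
    apply: NNPP => H'; apply: ni3 => x y z e; apply: NNPP => H2; apply: H'.
    by exists x, y, z; split => //; case=> ? ? ?; apply: H2.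
  have xnz : x != 0.
    apply/eqP => x0; move: e; rewrite x0 scale0r add0r => /iu [y0 z0]; by apply: hne.
  have [a [b el]] : exists a b : K, l = a *: u1 + b *: u2.
    exists (- y / x), (- z / x); apply: (solve3 xnz).
    by rewrite -[RHS]e; ring.
  subst l.
  have [u [hu i2 sp2 D]] := claimB h' hu1 hu2 iu lnz.
  have [t [s [ct hs iv1 iv2 [e1 e2 f1 f2]]]] := coord2 hl hu i2.
  have [ht _] := ct.
  exists t, (h' \mPo t); split => //; split; first exact: comp_homog ht hh'.
  right; split.
  + have := same_comp t (same_trans sp sp2); rewrite !rmorphM /= e1 e2.
    by rewrite XwE XxE expr2.
  + move=> c d [q eq]; have [c' [d' ecd]] := D c d; apply: (ndu c' d'); exists (q \mPo s).
    by rewrite -(iv1 h') eq XwE XxE rmorphM /= raddfD /= !comp_mpolyZ f1 f2 ecd.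
Qed.

End H.

Unset Implicit Arguments. Set Strict Implicit.

Theorem lemma3p2 (K : closedFieldType) (f g h : {mpoly K[4]}) :
  quadric f -> quadric g -> quadric h ->
  lin_indep3 f g h ->
  linrels_dim1 f g h ->
  (exists (l u1 u2 h' : {mpoly K[4]}),
     linform l /\ linform u1 /\ linform u2 /\ lin_indep2 u1 u2 /\ quadric h' /\
     same_span3 f g h (l * u1) (l * u2) h' /\
     ~ mdvd l h' /\
     (forall a b : K, ~ mdvd (a *: u1 + b *: u2) h'))
  /\
  (exists (t : 4.-tuple {mpoly K[4]}) (h' : {mpoly K[4]}),
     coord_change t /\ quadric h' /\
     ((same_span3 (f \mPo t) (g \mPo t) (h \mPo t)
                  (Xx K * Xw K) (Xy K * Xw K) h'
       /\ ~ mdvd (Xw K) h'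
       /\ forall a b : K, ~ mdvd (a *: Xx K + b *: Xy K) h')
      \/
      (same_span3 (f \mPo t) (g \mPo t) (h \mPo t)
                  (Xw K ^+ 2) (Xw K * Xx K) h'
       /\ forall a b : K, ~ mdvd (a *: Xw K + b *: Xx K) h'))).
Proof.
move=> qf qg qh li [a1 [a2 [a3 [rel nz U]]]].
have H : hyp f g h a1 a2 a3.
  split => //; case=> e1 e2 e3; move: nz; by rewrite e1 e2 e3 eqxx.
have C := part1 H.
split; last exact: part2 C.
move: C => [l [u1 [u2 [h' [[hl hu1 hu2 iu hh'] [lnz sp ndl ndu]]]]]].
by exists l, u1, u2, h'.
Qed.
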